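(* Let $M$ be a monoid and $I$ an rf-compatible ideal of $M$ such that $N=M\setminus I$ is a submonoid of $M$. Then $M$ is residually finite if and only if $N$ is residually finite.
   Context: An ideal $I$ of a monoid $M$ is rf-compatible with $M$ if for any two distinct $s,t\in I$ there is a congruence $\rho$ of finite index on the semigroup $I$ with $s/\rho\neq t/\rho$ such that $\rho\cup\Delta_M$ is a congruence on $M$, where $\Delta_M=\{(x,x):x\in M\}$. A monoid is residually finite if distinct elements are separated by homomorphisms to finite monoids. *)

(* Defs.v *)
From Stdlib Require Import List ProofIrrelevance.
Set Implicit Arguments.

Record Monoid := MkMonoid {
  carrier :> Type;
  mop : carrier -> carrier -> carrier;
  munit : carrier;
  massoc : forall x y z, mop x (mop y z) = mop (mop x y) z;
  mul1 : forall x, mop munit x = x;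
  mulr1 : forall x, mop x munit = x
}.

Arguments mop {m}.
Arguments munit {m}.

Definition is_finite (T : Type) : Prop := exists l : list T, forall x, In x l.

Definition is_monoid_hom {M F : Monoid} (f : M -> F) : Prop :=
  (forall x y, f (mop x y) = mop (f x) (f y)) /\ f munit = munit.

Definition residually_finite (M : Monoid) : Prop :=
  forall s t : M, s <> t ->
    exists (F : Monoid) (f : M -> F),
      is_finite F /\ is_monoid_hom (M:=M) (F:=F) f /\ f s <> f t.

Definition is_ideal {M : Monoid} (I : M -> Prop) : Prop :=
  forall m x, I x -> I (mop m x) /\ I (mop x m).

Definition is_congruence {M : Monoid} (r : M -> M -> Prop) : Prop :=
  (forall x, r x x) /\ (forall x y, r x y -> r y x) /\
  (forall x y z, r x y -> r y z -> r x z) /\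
  (forall x y m, r x y -> r (mop m x) (mop m y) /\ r (mop x m) (mop y m)).

(* rho (a relation on M, only its restriction to I matters) is a
   congruence on the semigroup I. *)
Definition is_congruence_on {M : Monoid} (I : M -> Prop) (rho : M -> M -> Prop) : Prop :=
  (forall x, I x -> rho x x) /\
  (forall x y, I x -> I y -> rho x y -> rho y x) /\
  (forall x y z, I x -> I y -> I z -> rho x y -> rho y z -> rho x z) /\
  (forall x y z, I x -> I y -> I z -> rho x y ->
      rho (mop z x) (mop z y) /\ rho (mop x z) (mop y z)).

Definition finite_index_on {M : Monoid} (I : M -> Prop) (rho : M -> M -> Prop) : Prop :=
  exists l : list M, (forall y, In y l -> I y) /\
    forall x, I x -> exists y, In y l /\ rho x y.

Definition union_diag {M : Monoid} (I : M -> Prop) (rho : M -> M -> Prop) : M -> M -> Prop :=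
  fun x y => (I x /\ I y /\ rho x y) \/ x = y.

Definition rf_compatible {M : Monoid} (I : M -> Prop) : Prop :=
  is_ideal I /\
  forall s t, I s -> I t -> s <> t ->
    exists rho : M -> M -> Prop,
      is_congruence_on I rho /\ finite_index_on I rho /\ ~ rho s t /\
      is_congruence (union_diag I rho).

Lemma sig_eq_pi (M : Monoid) (P : M -> Prop) (a b : {x : M | P x}) :
  proj1_sig a = proj1_sig b -> a = b.
Proof.
  destruct a as [a Ha], b as [b Hb]; simpl; intros ->.
  f_equal; apply proof_irrelevance.
Qed.

Definition submonoid {M : Monoid} (P : M -> Prop) (P1 : P munit)
  (PM : forall x y, P x -> P y -> P (mop x y)) : Monoid.
Proof.
  refine (@MkMonoid {x : M | P x}
            (fun a b => exist _ (mop (proj1_sig a) (proj1_sig b))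
                              (PM _ _ (proj2_sig a) (proj2_sig b)))
            (exist _ munit P1) _ _ _);
  intros; apply sig_eq_pi; simpl;
  [apply massoc | apply mul1 | apply mulr1].
Defined.

(* Main.v *)
Require Import Defs.
From Stdlib Require Import List Classical ClassicalEpsilon FunctionalExtensionality PropExtensionality ProofIrrelevance.
Import ListNotations.

Lemma sig_eq_gen (T:Type) (P:T->Prop) (a b : {x|P x}) : proj1_sig a = proj1_sig b -> a = b.
Proof. destruct a, b; simpl; intros ->; f_equal; apply proof_irrelevance. Qed.

Lemma quotient_exists (M:Monoid) (T:Type) (G : M -> T)
  (HG : forall x y z, G x = G y -> G (mop z x) = G (mop z y) /\ G (mop x z) = G (mop y z))
  (lT : list T) (HlT : forall x, In (G x) lT) :
  exists (Q:Monoid) (q : M -> Q), is_finite Q /\ is_monoid_hom q /\ forall x y, q x = q y -> G x = G y.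
Proof.
  assert (G2 : forall x x' y y', G x = G x' -> G y = G y' -> G (mop x y) = G (mop x' y')).
  { intros x x' y y' H1 H2. transitivity (G (mop x' y)). apply (HG x x' y H1). apply (HG y y' x' H2). }
  pose (Qc := {c : T | exists x, G x = c}).
  pose (qrep := fun a : Qc => proj1_sig (constructive_indefinite_description _ (proj2_sig a))).
  assert (qrep_spec : forall a, G (qrep a) = proj1_sig a).
  { intro a. unfold qrep. destruct (constructive_indefinite_description _ _); auto. }
  pose (qmk := fun x => exist (fun c => exists x, G x = c) (G x) (ex_intro _ x eq_refl) : Qc).
  unshelve eset (Q := @MkMonoid Qc (fun a b => qmk (mop (qrep a) (qrep b))) (qmk munit) _ _ _).
  - intros a b c. apply sig_eq_gen. cbv [proj1_sig qmk].
    transitivity (G (mop (qrep a) (mop (qrep b) (qrep c)))).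
    { apply G2; [reflexivity|]. rewrite qrep_spec. reflexivity. }
    rewrite massoc. apply G2; [|reflexivity]. rewrite qrep_spec. reflexivity.
  - intros a. apply sig_eq_gen. simpl. rewrite <- qrep_spec.
    transitivity (G (mop munit (qrep a))).
    { apply G2; [rewrite qrep_spec; reflexivity|reflexivity]. }
    rewrite mul1; reflexivity.
  - intros a. apply sig_eq_gen. simpl. rewrite <- qrep_spec.
    transitivity (G (mop (qrep a) munit)).
    { apply G2; [reflexivity|rewrite qrep_spec; reflexivity]. }
    rewrite mulr1; reflexivity.
  - exists Q, qmk. split; [|split].
    + pose (pre := fun c : T => match excluded_middle_informative (exists x, G x = c) with
                  | left H => proj1_sig (constructive_indefinite_description _ H)
                  | right _ => munit (m:=M) end).
      exists (map (fun c => qmk (pre c)) lT).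
      intros [c [x Hx]]. apply in_map_iff. exists c. split.
      * apply sig_eq_gen. simpl. unfold pre.
        destruct (excluded_middle_informative _) as [H|H].
        -- destruct (constructive_indefinite_description _ H); auto.
        -- exfalso; eauto.
      * subst; auto.
    + split.
      * intros x y. apply sig_eq_gen. simpl. apply G2; rewrite qrep_spec; reflexivity.
      * reflexivity.
    + intros x y H. exact (f_equal (@proj1_sig _ _) H).
Qed.

Fixpoint lists {A} (l : list A) (k : nat) : list (list A) :=
  match k with 0 => [[]] | S k => flat_map (fun a => map (cons a) (lists l k)) l end.

Lemma in_lists {A} (l s : list A) : (forall y, In y s -> In y l) -> In s (lists l (length s)).
Proof.
  induction s as [|a s IH]; simpl; intros H; auto.
  apply in_flat_map. exists a. split; auto. apply in_map. apply IH; auto.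
Qed.

Lemma urho (M : Monoid) (I : M -> Prop) (rho : M -> M -> Prop)
  (Hid : is_ideal I) (Hc : is_congruence_on I rho) (Hu : is_congruence (union_diag I rho)) :
  forall a b m, I a -> I b -> rho a b -> rho (mop m a) (mop m b) /\ rho (mop a m) (mop b m).
Proof.
  intros a b m Ha Hb Hab. destruct Hu as [_ [_ [_ Hm]]].
  destruct (Hm a b m (or_introl (conj Ha (conj Hb Hab)))) as [H1 H2].
  destruct Hc as [Hr _].
  split.
  - destruct H1 as [[_ [_ H]]|H]; auto. rewrite H. apply Hr. exact (proj1 (Hid m b Hb)).
  - destruct H2 as [[_ [_ H]]|H]; auto. rewrite H. apply Hr. exact (proj2 (Hid m b Hb)).
Qed.

Lemma map_eq_in {A B} (g h : A -> B) (l : list A) a : map g l = map h l -> In a l -> g a = h a.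
Proof.
  induction l as [|b l IH]; simpl; [contradiction|]. intros E [->|Hi]; injection E; auto.
Qed.

Lemma build (M:Monoid) (I:M->Prop) (Hid: is_ideal I) (N1 : ~ I munit)
  (NM : forall x y, ~ I x -> ~ I y -> ~ I (mop x y))
  (F:Monoid) (f : submonoid (fun x => ~ I x) N1 NM -> F) (HF: is_finite F) (Hf: is_monoid_hom f)
  (rho : M -> M -> Prop) (Hc : is_congruence_on I rho) (Hfi : finite_index_on I rho)
  (Hu : is_congruence (union_diag I rho)) :
  exists (Q:Monoid) (q:M->Q), is_finite Q /\ is_monoid_hom q /\ forall x y, q x = q y ->
   (I x /\ I y /\ rho x y) \/
   (~I x /\ ~I y /\ forall Hx Hy, f (exist (fun x => ~ I x) x Hx) = f (exist (fun x => ~ I x) y Hy)).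
Proof.
  pose proof (urho M I rho Hid Hc Hu) as UR.
  destruct Hfi as [l [Hl Hcov]].
  destruct Hc as [Hrefl [Hsym [Htr Hmul]]].
  pose (rep := fun a => epsilon (inhabits (munit (m:=M))) (fun y => In y l /\ rho a y)).
  assert (rep_spec : forall a, I a -> In (rep a) l /\ rho a (rep a)).
  { intros a Ha. unfold rep. apply epsilon_spec. destruct (Hcov a Ha) as [y Hy]; eauto. }
  assert (rep_eq : forall a b, I a -> I b -> rho a b -> rep a = rep b).
  { intros a b Ha Hb Hab. unfold rep. f_equal. extensionality y.
    apply propositional_extensionality; split; intros [Hy H]; split; auto.
    - apply (Htr b a y); auto.
    - apply (Htr a b y); auto. }
  assert (rep_rho : forall a b, I a -> I b -> rep a = rep b -> rho a b).
  { intros a b Ha Hb E. destruct (rep_spec a Ha) as [Ia Ra]. destruct (rep_spec b Hb) as [Ib Rb].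
    apply (Htr a (rep a) b); auto. rewrite E. auto. }
  assert (IL : forall m x, I x -> I (mop m x)) by (intros m x H; exact (proj1 (Hid m x H))).
  assert (IR : forall m x, I x -> I (mop x m)) by (intros m x H; exact (proj2 (Hid m x H))).
  assert (fM : forall a b Ha Hb Hab, f (exist (fun x => ~ I x) (mop a b) Hab) =
            mop (f (exist (fun x => ~ I x) a Ha)) (f (exist (fun x => ~ I x) b Hb))).
  { intros a b Ha Hb Hab. rewrite <- (proj1 Hf). f_equal. apply sig_eq_gen. reflexivity. }
  pose (G := fun x : M => match excluded_middle_informative (I x) with
    | left _ => (@None F, [rep x], @nil M)
    | right H => (Some (f (exist (fun x => ~ I x) x H)), map (fun k => rep (mop k x)) l,
                  map (fun k => rep (mop x k)) l) end).
  pose (R := fun x y => (I x /\ I y /\ rho x y) \/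
     (exists Hx Hy, f (exist (fun x => ~ I x) x Hx) = f (exist (fun x => ~ I x) y Hy) /\
       forall k, I k -> rho (mop k x) (mop k y) /\ rho (mop x k) (mop y k))).
  assert (Gintro : forall x y, R x y -> G x = G y).
  { intros x y [[Hx [Hy Hxy]]|[Hx [Hy [Ef Hk]]]]; unfold G;
      destruct (excluded_middle_informative (I x)) as [H1|H1];
      destruct (excluded_middle_informative (I y)) as [H2|H2]; try contradiction.
    - rewrite (rep_eq x y); auto.
    - rewrite (proof_irrelevance _ H1 Hx), (proof_irrelevance _ H2 Hy), Ef.
      f_equal; [f_equal|]; apply map_ext_in; intros k Hkl; apply rep_eq; auto;
        apply Hk; auto. }
  assert (Gchar : forall x y, G x = G y -> R x y).
  { intros x y E; unfold G in E;
      destruct (excluded_middle_informative (I x)) as [H1|H1];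
      destruct (excluded_middle_informative (I y)) as [H2|H2]; try discriminate.
    - left. injection E; intros; auto.
    - right. injection E; intros E3 E2 E1. exists H1, H2. split; auto.
      intros k Hk. destruct (rep_spec k Hk) as [Hkl Hkr].
      split.
      + apply (Htr _ (mop (rep k) x)); auto. apply UR; auto.
        apply (Htr _ (mop (rep k) y)); auto.
        apply rep_rho; auto. exact (map_eq_in _ _ _ _ E2 Hkl).
        apply Hsym; auto. apply UR; auto.
      + apply (Htr _ (mop x (rep k))); auto. apply UR; auto.
        apply (Htr _ (mop y (rep k))); auto.
        apply rep_rho; auto. exact (map_eq_in _ _ _ _ E3 Hkl).
        apply Hsym; auto. apply UR; auto. }
  assert (Rcong : forall x y z, R x y -> R (mop z x) (mop z y) /\ R (mop x z) (mop y z)).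
  { intros x y z [[Hx [Hy Hxy]]|[Hx [Hy [Ef Hk]]]].
    - split; left; repeat split; auto; apply UR; auto.
    - destruct (excluded_middle_informative (I z)) as [Hz|Hz].
      + split; left; repeat split; auto; apply Hk; auto.
      + split; right.
        * exists (NM _ _ Hz Hx), (NM _ _ Hz Hy). split.
          -- rewrite (fM z x Hz Hx), (fM z y Hz Hy), Ef. reflexivity.
          -- intros k Hk'. rewrite !massoc. split.
             ++ apply Hk; auto.
             ++ rewrite <- !massoc. apply UR; auto; apply Hk; auto.
        * exists (NM _ _ Hx Hz), (NM _ _ Hy Hz). split.
          -- rewrite (fM x z Hx Hz), (fM y z Hy Hz), Ef. reflexivity.
          -- intros k Hk'. split.
             ++ rewrite !massoc. apply UR; auto; apply Hk; auto.
             ++ rewrite <- !massoc. apply Hk; auto. }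
  destruct HF as [lF HlF].
  destruct (quotient_exists M _ G (fun x y z E => let H := Rcong x y z (Gchar x y E) in
              conj (Gintro _ _ (proj1 H)) (Gintro _ _ (proj2 H)))
     (list_prod (list_prod (None :: map Some lF) (lists l 1 ++ lists l (length l)))
        ([] :: lists l (length l)))) as [Q [q [HQ [Hq Hsep]]]].
  { intros x. unfold G. destruct (excluded_middle_informative (I x)) as [H1|H1].
    - apply in_prod; [apply in_prod|]; simpl; auto.
      apply in_or_app. left. apply (in_lists l [rep x]).
      intros y [<-|[]]. apply rep_spec; auto.
    - assert (Hm : forall g, (forall k, I k -> I (g k)) ->
                In (map (fun k => rep (g k)) l) (lists l (length l))).
      { intros g Hg. rewrite <- (length_map (fun k => rep (g k)) l).
        apply in_lists. intros y Hy. apply in_map_iff in Hy. destruct Hy as [k [<- Hk]].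
        apply rep_spec. apply Hg. apply Hl; auto. }
      apply in_prod; [apply in_prod|]; simpl.
      + right. apply in_map. auto.
      + apply in_or_app. right. apply Hm. auto.
      + right. apply Hm. auto. }
  exists Q, q. split; [|split]; auto.
  intros x y E. destruct (Gchar x y (Hsep x y E)) as [H|[Hx [Hy [Ef _]]]]; [left; auto|right].
  split; [|split]; auto. intros Hx' Hy'.
  rewrite (proof_irrelevance _ Hx' Hx), (proof_irrelevance _ Hy' Hy). auto.
Qed.

Definition unitM : Monoid.
Proof. refine (@MkMonoid unit (fun _ _ => tt) tt _ _ _); intros; destruct x; reflexivity. Defined.

Lemma full_ok (M:Monoid) (I:M->Prop) (Hid : is_ideal I) :
  is_congruence_on I (fun _ _ => True) /\ finite_index_on I (fun _ _ => True) /\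
  is_congruence (union_diag I (fun _ _ => True)).
Proof.
  split; [|split].
  - unfold is_congruence_on; repeat split; auto.
  - destruct (classic (exists i, I i)) as [[i Hi]|Hn].
    + exists [i]. split. intros y [<-|[]]; auto. intros x _. exists i; simpl; auto.
    + exists []. split. intros y []. intros x Hx. exfalso; eauto.
  - unfold is_congruence, union_diag. split; [|split; [|split]].
    + auto.
    + intros x y [[? [? ?]]| ->]; auto.
    + intros x y z [[? [? ?]]| ->] [[? [? ?]]| ->]; auto.
    + intros x y m [[Hx [Hy _]]| ->]; auto.
      split; left; repeat split.
      * exact (proj1 (Hid m x Hx)).
      * exact (proj1 (Hid m y Hy)).
      * exact (proj2 (Hid m x Hx)).
      * exact (proj2 (Hid m y Hy)).
Qed.

Theorem mainTheorem11 (M : Monoid) (I : M -> Prop)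
  (Hrf : rf_compatible I)
  (N1 : ~ I munit)
  (NM : forall x y, ~ I x -> ~ I y -> ~ I (mop x y)) :
  residually_finite M <-> residually_finite (submonoid (fun x => ~ I x) N1 NM).
Proof.
  destruct Hrf as [Hid Hrf]. split.
  - intros HM a b Hab.
    assert (Hne : proj1_sig a <> proj1_sig b).
    { intro E. apply Hab. apply sig_eq_gen. exact E. }
    destruct (HM _ _ Hne) as [F [f [HF [Hf Hs]]]].
    exists F, (fun a => f (proj1_sig a)). split; auto. split; auto.
    split.
    + intros x y. exact (proj1 Hf (proj1_sig x) (proj1_sig y)).
    + exact (proj2 Hf).
  - intros HN s t Hst.
    pose (tf := fun _ : submonoid (fun x => ~ I x) N1 NM => (tt : unitM)).
    assert (Htf : is_finite unitM) by (exists [tt]; intros []; simpl; auto).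
    assert (Htfh : is_monoid_hom tf) by (split; reflexivity).
    destruct (full_ok M I Hid) as [Fc [Ffi Fu]].
    destruct (classic (I s)) as [Hs|Hs]; destruct (classic (I t)) as [Ht|Ht].
    + destruct (Hrf s t Hs Ht Hst) as [rho [Hc [Hfi [Hn Hu]]]].
      destruct (build M I Hid N1 NM unitM tf Htf Htfh rho Hc Hfi Hu) as [Q [q [HQ [Hq Hsep]]]].
      exists Q, q. split; auto. split; auto. intro E.
      destruct (Hsep s t E) as [[_ [_ H]]|[H _]]; contradiction.
    + destruct (build M I Hid N1 NM unitM tf Htf Htfh _ Fc Ffi Fu) as [Q [q [HQ [Hq Hsep]]]].
      exists Q, q. split; auto. split; auto. intro E.
      destruct (Hsep s t E) as [[_ [H _]]|[H _]]; contradiction.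
    + destruct (build M I Hid N1 NM unitM tf Htf Htfh _ Fc Ffi Fu) as [Q [q [HQ [Hq Hsep]]]].
      exists Q, q. split; auto. split; auto. intro E.
      destruct (Hsep s t E) as [[H _]|[_ [H _]]]; contradiction.
    + assert (Hne : exist (fun x => ~ I x) s Hs <> exist (fun x => ~ I x) t Ht).
      { intro E. apply Hst. exact (f_equal (@proj1_sig _ _) E). }
      destruct (HN _ _ Hne) as [F [f [HF [Hf Hsf]]]].
      destruct (build M I Hid N1 NM F f HF Hf _ Fc Ffi Fu) as [Q [q [HQ [Hq Hsep]]]].
      exists Q, q. split; auto. split; auto. intro E.
      destruct (Hsep s t E) as [[H _]|[_ [_ H]]]; [contradiction|].
      apply Hsf. apply H.
Qed.
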